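(* Let $\mathcal{G}$ be a finite-dimensional nilpotent Lie algebra and $S$ a finite abelian semigroup. Then the $S$-expanded algebra $\mathcal{G}_S=S\otimes\mathcal{G}$ is nilpotent; any resonant subalgebra $\mathcal{G}_{S,R}$ is nilpotent; and, if $S$ has a zero element $0_S$, the $0_S$-reduced algebra $\mathcal{G}_S^{\mathrm{red}}$ is nilpotent.
   Context: For a Lie algebra $\mathcal{G}$ with basis $\{X_i\}$, $[X_i,X_j]=C_{ij}^kX_k$, and a finite abelian semigroup $S=\{\lambda_\alpha\}$ with 2-selector $K_{\alpha\beta}^\gamma$ ($=1$ if $\lambda_\alpha\lambda_\beta=\lambda_\gamma$, else $0$), $\mathcal{G}_S$ has basis $X_{(i,\alpha)}=\lambda_\alpha\otimes X_i$ and bracket $[X_{(i,\alpha)},X_{(j,\beta)}]=K_{\alpha\beta}^\gamma C_{ij}^kX_{(k,\gamma)}$. A resonant subalgebra: given $\mathcal{G}=\bigoplus_{p\in I}V_p$ with $[V_p,V_q]\subset\bigoplus_{r\in i(p,q)}V_r$ and $S=\bigcup_{p\in I}S_p$ with $S_p\cdot S_q\subset\bigcap_{r\in i(p,q)}S_r$, $\mathcal{G}_{S,R}=\bigoplus_p S_p\otimes V_p$. For a zero element $0_S$ ($0_S\lambda=0_S$ for all $\lambda$), $\mathcal{G}_S^{\mathrm{red}}$ is spanned by $X_{(i,\alpha)}$ with $\lambda_\alpha\ne0_S$ with the same structure constants restricted to $\lambda_\gamma\neq 0_S$. A Lie algebra $\mathcal{L}$ is nilpotent if the lower central series $\mathcal{L}_{(0)}=\mathcal{L}$,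 $\mathcal{L}_{(n)}=[\mathcal{L}_{(n-1)},\mathcal{L}]$ reaches $0$. *)

(* Defs.v *)
From HB Require Import structures.
From mathcomp Require Import all_boot all_order all_algebra.
Set Implicit Arguments. Unset Strict Implicit. Unset Printing Implicit Defensive.
Import GRing.Theory.
Local Open Scope ring_scope.


(* Bracket-generated subspace [U, W] := span { br u w | u in U, w in W }.
   By bilinearity of br it is the span of the brackets of basis vectors. *)
Definition brSpace (K : fieldType) (vT : vectType K) (br : vT -> vT -> vT)
    (U W : {vspace vT}) : {vspace vT} :=
  (\sum_(u <- vbasis U) \sum_(w <- vbasis W) <[br u w]>)%VS.

Definition lcs (K : fieldType) (vT : vectType K) (br : vT -> vT -> vT)
    (W : {vspace vT}) (n : nat) : {vspace vT} :=
  iter n (fun U => brSpace br U W) W.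

Definition lie_nilpotent_in (K : fieldType) (vT : vectType K)
    (br : vT -> vT -> vT) (W : {vspace vT}) : Prop :=
  exists n, lcs br W n = 0%VS.

Definition lie_nilpotent (K : fieldType) (vT : vectType K)
    (br : vT -> vT -> vT) : Prop := lie_nilpotent_in br fullv.

Definition is_lie_bracket (K : fieldType) (vT : vectType K)
    (br : vT -> vT -> vT) : Prop :=
  [/\ (forall (a : K) (x y z : vT), br (a *: x + y) z = a *: br x z + br y z),
      (forall (a : K) (x y z : vT), br z (a *: x + y) = a *: br z x + br z y),
      (forall x : vT, br x x = 0) &
      (forall x y z : vT, br x (br y z) + br y (br z x) + br z (br x y) = 0)].

Definition abelian_semigroup (S : finType) (op : S -> S -> S) : Prop :=
  associative op /\ commutative op.

(* S (x) G is identified with functions S -> G:  f = sum_a lambda_a (x) f a.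
   Element lambda_a (x) v : *)
Definition stens (K : fieldType) (vT : vectType K) (S : finType)
    (a : S) (v : vT) : {ffun S -> vT} :=
  [ffun b => if b == a then v else 0].

(* S-expanded bracket: [lambda_a (x) x, lambda_b (x) y] = lambda_(ab) (x) [x,y],
   i.e. in components K_{ab}^c C_{ij}^k. *)
Definition expBr (K : fieldType) (vT : vectType K) (S : finType)
    (op : S -> S -> S) (br : vT -> vT -> vT)
    (f g : {ffun S -> vT}) : {ffun S -> vT} :=
  [ffun c => \sum_(a : S) \sum_(b : S | op a b == c) br (f a) (g b)].

Definition resSpace (K : fieldType) (vT : vectType K) (S I : finType)
    (V : I -> {vspace vT}) (SS : I -> {set S}) : {vspace {ffun S -> vT}} :=
  (\sum_(p : I) \sum_(a in SS p) \sum_(v <- vbasis (V p)) <[stens a v]>)%VS.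

Definition resonant (K : fieldType) (vT : vectType K) (S I : finType)
    (op : S -> S -> S) (br : vT -> vT -> vT)
    (V : I -> {vspace vT}) (ii : I -> I -> {set I}) (SS : I -> {set S}) : Prop :=
  [/\ directv (\sum_(p : I) V p)%VS,
      (\sum_(p : I) V p)%VS = fullv,
      (forall p q x y, x \in V p -> y \in V q ->
          br x y \in (\sum_(r in ii p q) V r)%VS),
      (\bigcup_(p : I) SS p = [set: S]) &
      (forall p q a b r, a \in SS p -> b \in SS q -> r \in ii p q ->
          op a b \in SS r)].

Definition redSpace (K : fieldType) (vT : vectType K) (S : finType)
    (z : S) : {vspace {ffun S -> vT}} :=
  (\sum_(a : S | a != z) \sum_(v <- vbasis (fullv : {vspace vT})) <[stens a v]>)%VS.

Definition redBr (K : fieldType) (vT : vectType K) (S : finType)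
    (op : S -> S -> S) (br : vT -> vT -> vT) (z : S)
    (f g : {ffun S -> vT}) : {ffun S -> vT} :=
  [ffun c => if c == z then 0 else expBr op br f g c].

(* Main.v *)
Require Import Defs.
From HB Require Import structures.
From mathcomp Require Import all_boot all_order all_algebra.
Import GRing.Theory.
Local Open Scope ring_scope.

Section Aux.
Variables (K : fieldType) (vT : vectType K) (br : vT -> vT -> vT).
Hypothesis Hl : forall (a : K) (x y z : vT), br (a *: x + y) z = a *: br x z + br y z.
Hypothesis Hr : forall (a : K) (x y z : vT), br z (a *: x + y) = a *: br z x + br z y.

Lemma brL0 z : br 0 z = 0.
Proof.
have := Hl 1 0 0 z; rewrite !scale1r addr0 => H.
by apply: (addrI (br 0 z)); rewrite addr0 -H.
Qed.
Lemma brR0 z : br z 0 = 0.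
Proof.
have := Hr 1 0 0 z; rewrite !scale1r addr0 => H.
by apply: (addrI (br z 0)); rewrite addr0 -H.
Qed.
Lemma brLD x y z : br (x + y) z = br x z + br y z.
Proof. by have := Hl 1 x y z; rewrite !scale1r. Qed.
Lemma brRD x y z : br z (x + y) = br z x + br z y.
Proof. by have := Hr 1 x y z; rewrite !scale1r. Qed.
Lemma brLZ a x z : br (a *: x) z = a *: br x z.
Proof. by have := Hl a x 0 z; rewrite !addr0 brL0 addr0. Qed.
Lemma brRZ a x z : br z (a *: x) = a *: br z x.
Proof. by have := Hr a x 0 z; rewrite !addr0 brR0 addr0. Qed.

Lemma brL_sum n (F : 'I_n -> vT) z : br (\sum_i F i) z = \sum_i br (F i) z.
Proof. exact: (big_morph (fun x => br x z) (fun x y => brLD x y z) (brL0 z)). Qed.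
Lemma brR_sum n (F : 'I_n -> vT) z : br z (\sum_i F i) = \sum_i br z (F i).
Proof. exact: (big_morph (fun x => br z x) (fun x y => brRD x y z) (brR0 z)). Qed.

Lemma sum_seq_sup (s : seq vT) (F : vT -> {vspace vT}) x :
  x \in s -> (F x <= \sum_(u <- s) F u)%VS.
Proof. by move=> xs; rewrite (big_rem _ xs) /= addvSl. Qed.

Lemma br_mem (U W : {vspace vT}) x y : x \in U -> y \in W -> br x y \in brSpace br U W.
Proof.
move=> xU yW; rewrite (coord_vbasis xU) (coord_vbasis yW) brL_sum.
apply: rpred_sum => i _; rewrite brLZ brR_sum; apply: rpredZ.
apply: rpred_sum => j _; rewrite brRZ; apply: rpredZ.
rewrite /brSpace memvE.
set u := (vbasis U)`_i; set w := (vbasis W)`_j.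
have uU : u \in (vbasis U : seq vT) by rewrite mem_nth // size_tuple.
have wW : w \in (vbasis W : seq vT) by rewrite mem_nth // size_tuple.
have H1 := sum_seq_sup _ (fun u => \sum_(w <- vbasis W) <[br u w]>)%VS _ uU.
have H2 := sum_seq_sup _ (fun w => <[br u w]>)%VS _ wW.
exact: subv_trans H2 H1.
Qed.

Lemma brSpace_sub (vU : vectType K) (B : vU -> vU -> vU) (U W X : {vspace vU}) :
  (forall u w, u \in U -> w \in W -> B u w \in X) -> (brSpace B U W <= X)%VS.
Proof.
move=> H; rewrite /brSpace big_seq.
apply: (big_ind (fun V => V <= X)%VS) => [|V1 V2 h1 h2|u us]; rewrite ?sub0v ?subv_add ?h1 //.
rewrite big_seq.
apply: (big_ind (fun V => V <= X)%VS) => [|V1 V2 h1 h2|w ws]; rewrite ?sub0v ?subv_add ?h1 //.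
by rewrite -memvE H // ?vbasis_mem.
Qed.
End Aux.

Section Eval.
Variables (K : fieldType) (vT : vectType K) (S : finType).
Definition evalf (c : S) (f : {ffun S -> vT}) : vT := f c.
Lemma evalf_lin c : linear (evalf c).
Proof. by move=> a f g; rewrite /evalf !ffunE. Qed.
HB.instance Definition _ c := GRing.isLinear.Build K {ffun S -> vT} vT _ (evalf c) (evalf_lin c).
Definition evh c : 'Hom({ffun S -> vT}, vT) := linfun (evalf c).
End Eval.

Lemma lcs_gen (K : fieldType) (vT : vectType K) (br : vT -> vT -> vT) (S : finType)
  (B : {ffun S -> vT} -> {ffun S -> vT} -> {ffun S -> vT}) :
  (forall (L : {vspace vT}) (f g : {ffun S -> vT}), (forall c, f c \in L) ->
      forall c, B f g c \in brSpace br L fullv) ->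
  forall W n f, f \in lcs B W n -> forall c, f c \in lcs br fullv n.
Proof.
move=> HB W n.
suff H : forall c, (lcs B W n <= @evh _ vT S c @^-1: lcs br fullv n)%VS.
  by move=> f fl c; have := subvP (H c) f fl; rewrite -memv_preim lfunE.
elim: n => [|n IH] c /=.
  by apply/subvP => f _; rewrite -memv_preim memvf.
apply: brSpace_sub => u w uL _; rewrite -memv_preim lfunE /evalf.
apply: HB => c'; have := subvP (IH c') u uL; by rewrite -memv_preim lfunE.
Qed.

Arguments lcs_gen {K vT br S B}.
Lemma lcs_zero (K : fieldType) (vT : vectType K) (br : vT -> vT -> vT) (S : finType)
  (B : {ffun S -> vT} -> {ffun S -> vT} -> {ffun S -> vT}) W :
  (forall (L : {vspace vT}) (f g : {ffun S -> vT}), (forall c, f c \in L) ->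
      forall c, B f g c \in brSpace br L fullv) ->
  lie_nilpotent br -> lie_nilpotent_in B W.
Proof.
move=> HB [n Hn]; exists n; apply/eqP; rewrite -subv0; apply/subvP => f fl.
rewrite memv0; apply/eqP/ffunP => c; rewrite ffunE.
by have := lcs_gen HB W n f fl c; rewrite Hn memv0 => /eqP.
Qed.
Arguments lcs_zero {K vT br S B}.

Theorem mainTheorem4 (K : fieldType) (vT : vectType K) (br : vT -> vT -> vT)
    (S : finType) (op : S -> S -> S) :
  is_lie_bracket br -> lie_nilpotent br -> abelian_semigroup op ->
  [/\ lie_nilpotent (expBr op br),
      (forall (I : finType) (V : I -> {vspace vT}) (ii : I -> I -> {set I})
              (SS : I -> {set S}),
          resonant op br V ii SS ->
          lie_nilpotent_in (expBr op br) (resSpace V SS)) &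
      (forall z : S, (forall l : S, op z l = z) ->
          lie_nilpotent_in (redBr op br z) (redSpace vT z))].
Proof.
move=> [Hl Hr _ _] Hn _.
have HE : forall (L : {vspace vT}) (f g : {ffun S -> vT}), (forall c, f c \in L) ->
    forall c, expBr op br f g c \in brSpace br L fullv.
  move=> L f g Hf c; rewrite ffunE; apply: rpred_sum => a _.
  by apply: rpred_sum => b _; apply: br_mem => //; rewrite memvf.
split.
- exact: lcs_zero HE Hn.
- by move=> *; apply: lcs_zero HE Hn.
- move=> z _; apply: lcs_zero Hn => L f g Hf c; rewrite ffunE.
  by case: ifP => _; rewrite ?rpred0 ?HE.
Qed.
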